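(* Let $P$ be a program and $G$ a goal. Suppose every infinite SLD derivation of $G$ in $P$ (under arbitrary selection of atoms) is pruned by $EVR_L$. Then there is a finite bound $l$ such that every resolvent $R$ occurring in any SLD derivation of $G$ in $P$ satisfies $\#R\le l$.
   Context: Goals are finite lists of atoms; $\#R$ is the number of atoms of $R$; $=_L$ denotes equality of goals as lists. A clause is $h\leftarrow B$; a program is a finite set of clauses. If $G=a_1,\dots,a_k$, $c=(h\leftarrow B)$, $\xi$ a renaming and $\theta$ an idempotent relevant mgu of $h\xi$ and some $a_i$, then $(a_1,\dots,a_{i-1},B\xi,a_{i+1},\dots,a_k)\theta$ is a resolvent. An SLD derivation of $G_0$ in $P$ is a finite or infinite sequence $G_0\xrightarrow{c_0\xi_0,\theta_0}G_1\xrightarrow{c_1\xi_1,\theta_1}\cdots$ of such steps with $c_j\in P$ and $var(c_j\xi_j)\cap(var(G_0)\cup var(c_0\xi_0)\cup\dots\cup var(c_{j-1}\xi_{j-1}))=\emptyset$; the selected atom at each step is arbitrary. $EVR_L$ (Equality Variant of Resultant as Lists) check: a derivation $G_0\xrightarrow{\theta_0}G_1\xrightarrow{\theta_1}\cdots$ is pruned by $EVR_L$ if there exist indices $0\le i<j$ and a renaming $\tau$ with $G_0\theta_0\cdots\theta_{j-1}=G_0\theta_0\cdots\theta_{i-1}\tau$ and $G_j=_L G_i\tau$. *)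

(* Defs.v *)
From Stdlib Require Import List Arith.
Import ListNotations.
Set Implicit Arguments.

Section Syntax.
Variables (Fsym Psym : Type).

Inductive term : Type :=
| Var : nat -> term
| Fn : Fsym -> list term -> term.

Record atom : Type := Atom { pred : Psym; args : list term }.

Definition goal := list atom.

Record clause : Type := Clause { head : atom; body : list atom }.

Definition program := list clause.

(* Substitutions: maps from variables to terms (domain = {x | s x <> Var x}). *)
Definition subst := nat -> term.

Fixpoint tsubst (s : subst) (t : term) : term :=
  match t with
  | Var x => s x
  | Fn f ts => Fn f (map (tsubst s) ts)
  end.

Definition asubst (s : subst) (a : atom) : atom :=
  Atom (pred a) (map (tsubst s) (args a)).

Definition gsubst (s : subst) (g : goal) : goal := map (asubst s) g.

Definition csubst (s : subst) (c : clause) : clause :=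
  Clause (asubst s (head c)) (gsubst s (body c)).

Fixpoint tvars (t : term) : list nat :=
  match t with
  | Var x => [x]
  | Fn _ ts => flat_map tvars ts
  end.

Definition avars (a : atom) : list nat := flat_map tvars (args a).
Definition gvars (g : goal) : list nat := flat_map avars g.
Definition cvars (c : clause) : list nat := avars (head c) ++ gvars (body c).

Definition renaming (s : subst) : Prop :=
  exists f : nat -> nat,
    (forall x, s x = Var (f x)) /\
    (forall x y, f x = f y -> x = y) /\
    (forall y, exists x, f x = y) /\
    (exists n, forall x, n <= x -> f x = x).

Definition unifier (s : subst) (a1 a2 : atom) : Prop := asubst s a1 = asubst s a2.

Definition mgu (th : subst) (a1 a2 : atom) : Prop :=
  unifier th a1 a2 /\
  forall s, unifier s a1 a2 -> exists eta, forall x, s x = tsubst eta (th x).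

Definition idempotent (th : subst) : Prop := forall x, tsubst th (th x) = th x.

Definition relevant (th : subst) (a1 a2 : atom) : Prop :=
  forall x, th x <> Var x ->
    In x (avars a1 ++ avars a2) /\
    (forall y, In y (tvars (th x)) -> In y (avars a1 ++ avars a2)).

Definition sld_step (P : program) (G : goal) (c : clause) (xi th : subst) (G' : goal) : Prop :=
  In c P /\ renaming xi /\
  exists i a,
    nth_error G i = Some a /\
    idempotent th /\ relevant th (asubst xi (head c)) a /\ mgu th (asubst xi (head c)) a /\
    G' = gsubst th (firstn i G ++ gsubst xi (body c) ++ skipn (S i) G).

(* length of a derivation: [Some n] = finite with n steps (goals G_0..G_n),
   [None] = infinite. *)
Definition step_in (len : option nat) (j : nat) : Prop :=
  match len with None => True | Some n => j < n end.

Definition goal_in (len : option nat) (j : nat) : Prop :=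
  match len with None => True | Some n => j <= n end.

(* SLD derivation of G0 in P: goals g j, clauses c j, renamings xi j, mgus th j,
   with the standardization-apart condition on the renamed clauses. *)
Definition sld_derivation (P : program) (G0 : goal) (len : option nat)
  (g : nat -> goal) (c : nat -> clause) (xi th : nat -> subst) : Prop :=
  g 0 = G0 /\
  forall j, step_in len j ->
    sld_step P (g j) (c j) (xi j) (th j) (g (S j)) /\
    (forall x, In x (cvars (csubst (xi j) (c j))) ->
       ~ In x (gvars G0) /\
       forall k, k < j -> ~ In x (cvars (csubst (xi k) (c k)))).

Fixpoint apply_upto (th : nat -> subst) (j : nat) (G : goal) : goal :=
  match j with
  | 0 => G
  | S j' => gsubst (th j') (apply_upto th j' G)
  end.

Definition pruned_EVR_L (len : option nat) (G0 : goal) (g : nat -> goal) (th : nat -> subst) : Prop :=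
  exists i j tau, i < j /\ goal_in len j /\ renaming tau /\
    apply_upto th j G0 = gsubst tau (apply_upto th i G0) /\
    g j = gsubst tau (g i).

End Syntax.

Arguments Var {Fsym}.

(* Main.v *)
Require Import Defs.
From Stdlib Require Import List Arith.
From Stdlib Require Import Lia Classical ClassicalEpsilon.
Import ListNotations.
Set Implicit Arguments. Unset Strict Implicit.

Section Terms.
Variable Fsym Psym : Type.
Notation trm := (term Fsym).
Notation atm := (atom Fsym Psym).

Lemma term_ind2 (Q : trm -> Prop) :
  (forall n, Q (Var n)) ->
  (forall f ts, (forall t, In t ts -> Q t) -> Q (Fn f ts)) ->
  forall t, Q t.
Proof.
  intros HV HF.
  fix IH 1. intros [n | f ts].
  - apply HV.
  - apply HF. induction ts as [|t ts IHts]; simpl.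
    + intros _ [].
    + intros u [<- | Hu]. apply IH. apply IHts, Hu.
Qed.

Lemma tsubst_comp (s t : subst Fsym) (u : trm) :
  tsubst s (tsubst t u) = tsubst (fun x => tsubst s (t x)) u.
Proof.
  induction u using term_ind2; simpl; auto.
  f_equal. rewrite map_map. apply map_ext_in. auto.
Qed.

Lemma tsubst_ext (s s' : subst Fsym) (u : trm) :
  (forall x, In x (tvars u) -> s x = s' x) -> tsubst s u = tsubst s' u.
Proof.
  induction u using term_ind2; simpl; intros E.
  - apply E; auto.
  - f_equal. apply map_ext_in. intros t Ht. apply H; auto.
    intros x Hx. apply E. apply in_flat_map. eauto.
Qed.

Lemma tsubst_id (u : trm) : tsubst (fun x => Var x) u = u.
Proof.
  induction u using term_ind2; simpl; auto.
  f_equal. rewrite <- (map_id ts) at 2. apply map_ext_in; auto.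
Qed.

Lemma tvars_tsubst (s : subst Fsym) (u : trm) y :
  In y (tvars (tsubst s u)) <-> exists x, In x (tvars u) /\ In y (tvars (s x)).
Proof.
  induction u using term_ind2; simpl.
  - split. intros; exists n; auto. intros [x [[<-|[]] Hx]]; auto.
  - rewrite in_flat_map. split.
    + intros [t [Ht Hy]]. apply in_map_iff in Ht. destruct Ht as [t' [<- Ht']].
      apply H in Hy; auto. destruct Hy as [x [Hx Hy]]. exists x. split; auto.
      apply in_flat_map; eauto.
    + intros [x [Hx Hy]]. apply in_flat_map in Hx. destruct Hx as [t [Ht Hx]].
      exists (tsubst s t). split. apply in_map; auto. apply H; eauto.
Qed.

Lemma map_fix_id {A} (f : A -> A) l : map f l = l -> forall x, In x l -> f x = x.
Proof.
  induction l; simpl; intros E x Hx. destruct Hx.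
  injection E; intros E2 E1. destruct Hx as [<-|Hx]; auto.
Qed.

Lemma tsubst_fix (s : subst Fsym) (u : trm) :
  tsubst s u = u -> forall x, In x (tvars u) -> s x = Var x.
Proof.
  induction u using term_ind2; simpl; intros E x Hx.
  - destruct Hx as [<-|[]]; auto.
  - injection E; intros E1. apply in_flat_map in Hx. destruct Hx as [t [Ht Hx]].
    apply (H t Ht); auto. apply (@map_fix_id _ (tsubst s) ts E1 t Ht).
Qed.

Lemma tsubst_is_var (s : subst Fsym) (u : trm) y :
  tsubst s u = Var y -> exists z, u = Var z /\ s z = Var y.
Proof. destruct u; simpl; intros E. eauto. discriminate. Qed.

Lemma asubst_comp (s t : subst Fsym) (a : atm) :
  asubst s (asubst t a) = asubst (fun x => tsubst s (t x)) a.
Proof.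
  unfold asubst; simpl. f_equal. rewrite map_map. apply map_ext. intros; apply tsubst_comp.
Qed.

Lemma asubst_ext (s s' : subst Fsym) (a : atm) :
  (forall x, In x (avars a) -> s x = s' x) -> asubst s a = asubst s' a.
Proof.
  unfold asubst, avars; intros E. f_equal. apply map_ext_in. intros t Ht.
  apply tsubst_ext. intros x Hx. apply E. apply in_flat_map; eauto.
Qed.

Lemma asubst_id (a : atm) : asubst (fun x => Var x) a = a.
Proof.
  destruct a as [p l]. unfold asubst; simpl. f_equal.
  rewrite <- (map_id l) at 2. apply map_ext. apply tsubst_id.
Qed.

Lemma avars_asubst (s : subst Fsym) (a : atm) y :
  In y (avars (asubst s a)) <-> exists x, In x (avars a) /\ In y (tvars (s x)).
Proof.
  unfold avars, asubst; simpl. rewrite in_flat_map. split.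
  - intros [t [Ht Hy]]. apply in_map_iff in Ht. destruct Ht as [t' [<- Ht']].
    apply tvars_tsubst in Hy. destruct Hy as [x [Hx Hy]]. exists x. split; auto.
    apply in_flat_map; eauto.
  - intros [x [Hx Hy]]. apply in_flat_map in Hx. destruct Hx as [t [Ht Hx]].
    exists (tsubst s t). split. apply in_map; auto. apply tvars_tsubst; eauto.
Qed.

Lemma gsubst_comp (s t : subst Fsym) (g : goal Fsym Psym) :
  gsubst s (gsubst t g) = gsubst (fun x => tsubst s (t x)) g.
Proof.
  unfold gsubst. rewrite map_map. apply map_ext. intros; apply asubst_comp.
Qed.

Lemma gsubst_ext (s s' : subst Fsym) (g : goal Fsym Psym) :
  (forall x, In x (gvars g) -> s x = s' x) -> gsubst s g = gsubst s' g.
Proof.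
  unfold gsubst, gvars; intros E. apply map_ext_in. intros a Ha.
  apply asubst_ext. intros x Hx. apply E. apply in_flat_map; eauto.
Qed.

Lemma gsubst_id (g : goal Fsym Psym) : gsubst (fun x => Var x) g = g.
Proof.
  unfold gsubst. rewrite <- (map_id g) at 2. apply map_ext. apply asubst_id.
Qed.

Lemma gvars_gsubst (s : subst Fsym) (g : goal Fsym Psym) y :
  In y (gvars (gsubst s g)) <-> exists x, In x (gvars g) /\ In y (tvars (s x)).
Proof.
  unfold gvars, gsubst. rewrite in_flat_map. split.
  - intros [a [Ha Hy]]. apply in_map_iff in Ha. destruct Ha as [a' [<- Ha']].
    apply avars_asubst in Hy. destruct Hy as [x [Hx Hy]]. exists x. split; auto.
    apply in_flat_map; eauto.
  - intros [x [Hx Hy]]. apply in_flat_map in Hx. destruct Hx as [a [Ha Hx]].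
    exists (asubst s a). split. apply in_map; auto. apply avars_asubst; eauto.
Qed.

Lemma gvars_app (g1 g2 : goal Fsym Psym) x :
  In x (gvars (g1 ++ g2)) <-> In x (gvars g1) \/ In x (gvars g2).
Proof. unfold gvars. rewrite flat_map_app. apply in_app_iff. Qed.

Lemma gsubst_app s (g1 g2 : goal Fsym Psym) : gsubst s (g1 ++ g2) = gsubst s g1 ++ gsubst s g2.
Proof. apply map_app. Qed.

Lemma gvars_incl (g1 g2 : goal Fsym Psym) : incl g1 g2 -> incl (gvars g1) (gvars g2).
Proof.
  unfold gvars; intros H x Hx. apply in_flat_map in Hx. destruct Hx as [a [Ha Hx]].
  apply in_flat_map; eauto.
Qed.

Lemma cvars_csubst (s : subst Fsym) (c : clause Fsym Psym) y :
  In y (cvars (csubst s c)) <-> exists x, In x (cvars c) /\ In y (tvars (s x)).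
Proof.
  unfold cvars, csubst; simpl. rewrite in_app_iff, avars_asubst, gvars_gsubst.
  split.
  - intros [[x [Hx Hy]]|[x [Hx Hy]]]; exists x; rewrite in_app_iff; auto.
  - intros [x [Hx Hy]]. apply in_app_iff in Hx. destruct Hx; [left|right]; eauto.
Qed.

Lemma csubst_comp (s t : subst Fsym) (c : clause Fsym Psym) :
  csubst s (csubst t c) = csubst (fun x => tsubst s (t x)) c.
Proof. unfold csubst; simpl. rewrite asubst_comp, gsubst_comp. auto. Qed.

Lemma csubst_ext (s s' : subst Fsym) (c : clause Fsym Psym) :
  (forall x, In x (cvars c) -> s x = s' x) -> csubst s c = csubst s' c.
Proof.
  unfold csubst, cvars; intros E. f_equal.
  apply asubst_ext; intros; apply E, in_app_iff; auto.
  apply gsubst_ext; intros; apply E, in_app_iff; auto.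
Qed.

End Terms.

Lemma in_le_max x W : In x W -> x <= list_max W.
Proof.
  intros H. assert (Forall (fun k => k <= list_max W) W) as F.
  { apply list_max_le. auto. }
  rewrite Forall_forall in F. auto.
Qed.

Definition is_perm (p q : nat -> nat) (W : list nat) : Prop :=
  (forall x, p (q x) = x) /\ (forall x, q (p x) = x) /\ (forall x, ~ In x W -> p x = x).

Lemma perm_q_fix p q W x : is_perm p q W -> ~ In x W -> q x = x.
Proof.
  intros [H1 [H2 H3]] Hx. rewrite <- (H3 x Hx) at 1. apply H2.
Qed.

Lemma perm_inv p q W : is_perm p q W -> is_perm q p W.
Proof. intros H. pose proof (fun x => @perm_q_fix p q W x H). destruct H as [H1 [H2 H3]]. repeat split; auto. Qed.

Lemma perm_maps_W p q W x : is_perm p q W -> (In x W <-> In (p x) W).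
Proof.
  intros H. pose proof H as [H1 [H2 H3]]. split; intros Hx.
  - destruct (in_dec Nat.eq_dec (p x) W) as [|n]; auto.
    exfalso. assert (p (p x) = p x) by auto.
    assert (p x = x). { rewrite <- (H2 (p x)), H0, H2. auto. }
    rewrite H4 in n; auto.
  - destruct (in_dec Nat.eq_dec x W) as [|n]; auto.
    rewrite H3 in Hx; auto.
Qed.

Lemma perm_id : is_perm (fun x => x) (fun x => x) [].
Proof. repeat split; auto. Qed.

Lemma perm_comp p q W p' q' W' :
  is_perm p q W -> is_perm p' q' W' ->
  is_perm (fun x => p' (p x)) (fun x => q (q' x)) (W ++ W').
Proof.
  intros [H1 [H2 H3]] [H1' [H2' H3']]. repeat split; intros x.
  - rewrite H1. auto.
  - rewrite H2'. auto.
  - rewrite in_app_iff. intros Hx. rewrite H3, H3'; auto.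
Qed.

Lemma perm_bound p q W x : is_perm p q W -> S (list_max W) <= x -> p x = x /\ q x = x.
Proof.
  intros H Hx. assert (~ In x W). { intros Hi. apply in_le_max in Hi. lia. }
  split. apply H; auto. eapply perm_q_fix; eauto.
Qed.

Definition psub {Fsym} (p : nat -> nat) : subst Fsym := fun x => Var (p x).

Lemma perm_renaming {Fsym} p q W : is_perm p q W -> renaming (@psub Fsym p).
Proof.
  intros H. exists p. pose proof H as [H1 [H2 H3]]. repeat split; auto.
  - intros x y E. rewrite <- (H2 x), E; auto.
  - intros y. exists (q y). auto.
  - exists (S (list_max W)). intros x Hx. apply (perm_bound H Hx).
Qed.

Lemma renaming_conj {Fsym} (tau : subst Fsym) p1 q1 W1 p2 q2 W2 :
  renaming tau -> is_perm p1 q1 W1 -> is_perm p2 q2 W2 ->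
  renaming (fun x => tsubst (psub p2) (tau (q1 x))).
Proof.
  intros [f [Hf [Hinj [Hsurj [n Hn]]]]] P1 P2.
  exists (fun x => p2 (f (q1 x))). split; [|split; [|split]].
  - intros x. rewrite Hf. reflexivity.
  - intros x y E. destruct P2 as [A1 [A2 A3]]. destruct P1 as [B1 [B2 B3]].
    apply (f_equal q2) in E. rewrite !A2 in E. apply Hinj in E.
    apply (f_equal p1) in E. rewrite !B1 in E. auto.
  - intros y. destruct P2 as [A1 [A2 A3]]. destruct P1 as [B1 [B2 B3]].
    destruct (Hsurj (q2 y)) as [x Hx]. exists (p1 x). rewrite B2, Hx. auto.
  - exists (max n (max (S (list_max W1)) (S (list_max W2)))). intros x Hx.
    destruct (perm_bound P1 (x:=x)) as [_ E1]. lia.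
    destruct (perm_bound P2 (x:=x)) as [E2 _]. lia.
    rewrite E1, Hn by lia. auto.
Qed.

Lemma renaming_comp {Fsym} (tau : subst Fsym) p q W :
  renaming tau -> is_perm p q W -> renaming (fun x => tsubst (psub p) (tau x)).
Proof.
  intros R P. pose proof (renaming_conj R perm_id P). simpl in H. exact H.
Qed.

Definition sw (c b x : nat) : nat :=
  if Nat.eqb x c then b else if Nat.eqb x b then c else x.

Lemma sw_inv c b x : sw c b (sw c b x) = x.
Proof.
  unfold sw. destruct (Nat.eqb_spec x c) as [e1|n1].
  - destruct (Nat.eqb_spec b c) as [e2|n2]. lia. rewrite Nat.eqb_refl. auto.
  - destruct (Nat.eqb_spec x b) as [e3|n3].
    + rewrite Nat.eqb_refl. auto.
    + destruct (Nat.eqb_spec x c); [lia|]. destruct (Nat.eqb_spec x b); [lia|]. auto.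
Qed.

Lemma perm_extend (W : list nat) (E : list (nat * nat)) :
  (forall a b, In (a, b) E -> In a W /\ In b W) ->
  (forall a b a' b', In (a, b) E -> In (a', b') E -> (a = a' <-> b = b')) ->
  exists p q, is_perm p q W /\ forall a b, In (a, b) E -> p a = b.
Proof.
  induction E as [|[a b] E IH]; intros HW HC.
  - exists (fun x => x), (fun x => x). split. repeat split; auto. intros a b [].
  - destruct IH as [p [q [P Hp]]].
    { intros; apply HW; simpl; auto. }
    { intros; apply HC; simpl; auto. }
    set (c := p a).
    assert (Ha : In a W /\ In b W) by (apply HW; simpl; auto).
    assert (Hc : In c W) by (apply (perm_maps_W a P); tauto).
    exists (fun x => sw c b (p x)), (fun x => q (sw c b x)).
    pose proof P as [P1 [P2 P3]]. split.
    + repeat split; intros x.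
      * rewrite P1. apply sw_inv.
      * rewrite sw_inv. auto.
      * intros Hx. rewrite P3 by auto. unfold sw.
        destruct (Nat.eqb_spec x c); subst; try tauto.
        destruct (Nat.eqb_spec x b); subst; try tauto.
    + intros a' b' [E1 | E1].
      * injection E1; intros; subst. unfold sw. fold c. rewrite Nat.eqb_refl. auto.
      * pose proof (Hp _ _ E1) as Ea'. rewrite Ea'. unfold sw.
        destruct (Nat.eqb_spec b' c) as [e|ne].
        -- unfold c in e. rewrite <- Ea' in e.
           apply (f_equal q) in e. rewrite !P2 in e. subst a'.
           assert (b' = b). { apply (HC a b' a b); simpl; auto. }
           subst b'. auto.
        -- destruct (Nat.eqb_spec b' b) as [eb|nb]; auto.
           exfalso. apply ne. assert (a' = a). { apply (HC a' b' a b); simpl; auto. }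
           subst a'. unfold c. auto.
Qed.

Section Conj.
Variable Fsym Psym : Type.
Notation trm := (term Fsym).
Notation atm := (atom Fsym Psym).

Definition conj (p q : nat -> nat) (th : subst Fsym) : subst Fsym :=
  fun x => tsubst (psub p) (th (q x)).

Lemma conj_fun p q W (th : subst Fsym) : is_perm p q W ->
  forall x, tsubst (conj p q th) (psub p x) = tsubst (psub p) (th x).
Proof. intros [P1 [P2 P3]] x. unfold psub at 2. simpl. unfold conj. rewrite P2. auto. Qed.

Lemma conj_t p q W (th : subst Fsym) (t : trm) : is_perm p q W ->
  tsubst (conj p q th) (tsubst (psub p) t) = tsubst (psub p) (tsubst th t).
Proof.
  intros P. rewrite !tsubst_comp. apply tsubst_ext. intros x _. apply (conj_fun th P).
Qed.

Lemma conj_a p q W (th : subst Fsym) (a : atm) : is_perm p q W ->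
  asubst (conj p q th) (asubst (psub p) a) = asubst (psub p) (asubst th a).
Proof.
  intros P. rewrite !asubst_comp. apply asubst_ext. intros x _. apply (conj_fun th P).
Qed.

Lemma conj_g p q W (th : subst Fsym) (g : goal Fsym Psym) : is_perm p q W ->
  gsubst (conj p q th) (gsubst (psub p) g) = gsubst (psub p) (gsubst th g).
Proof.
  intros P. rewrite !gsubst_comp. apply gsubst_ext. intros x _. apply (conj_fun th P).
Qed.

Lemma tvars_psub p y x : In y (tvars (@psub Fsym p x)) <-> y = p x.
Proof. simpl. split. intros [<-|[]]; auto. auto. Qed.

Lemma avars_psub p (a : atm) y : In y (avars (asubst (psub p) a)) <-> exists x, In x (avars a) /\ y = p x.
Proof.
  rewrite avars_asubst. split; intros [x [H1 H2]]; exists x; split; auto.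
  apply tvars_psub; auto. apply tvars_psub; auto.
Qed.

Lemma conj_mgu p q W (th : subst Fsym) (a1 a2 : atm) : is_perm p q W ->
  mgu th a1 a2 -> mgu (conj p q th) (asubst (psub p) a1) (asubst (psub p) a2).
Proof.
  intros P [U M]. pose proof P as [P1 [P2 P3]]. split.
  - unfold unifier in *. rewrite !(conj_a _ _ P), U. auto.
  - intros s Hs. destruct (M (fun x => s (p x))) as [eta Heta].
    + unfold unifier in *. rewrite !asubst_comp in Hs. exact Hs.
    + exists (fun y => eta (q y)). intros x. unfold conj.
      rewrite tsubst_comp. simpl. rewrite <- (P1 x) at 1. rewrite Heta.
      apply tsubst_ext. intros; simpl; rewrite P2; auto.
Qed.

Lemma conj_idem p q W (th : subst Fsym) : is_perm p q W ->
  idempotent th -> idempotent (conj p q th).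
Proof.
  intros P I x. unfold conj at 2. rewrite (conj_t th _ P), I. auto.
Qed.

Lemma conj_relevant p q W (th : subst Fsym) (a1 a2 : atm) : is_perm p q W ->
  relevant th a1 a2 -> relevant (conj p q th) (asubst (psub p) a1) (asubst (psub p) a2).
Proof.
  intros P R x Hx. pose proof P as [P1 [P2 P3]].
  assert (Hq : th (q x) <> Var (q x)).
  { intros E. apply Hx. unfold conj. rewrite E. simpl. unfold psub. rewrite P1. auto. }
  destruct (R _ Hq) as [R1 R2]. split.
  - rewrite in_app_iff, !avars_psub. rewrite in_app_iff in R1.
    destruct R1; [left|right]; exists (q x); auto.
  - intros y Hy. unfold conj in Hy. apply tvars_tsubst in Hy.
    destruct Hy as [z [Hz Hy]]. apply tvars_psub in Hy. subst y.
    specialize (R2 z Hz). rewrite in_app_iff, !avars_psub. rewrite in_app_iff in R2.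
    destruct R2; [left|right]; exists z; auto.
Qed.

Lemma relevant_range (th : subst Fsym) (a1 a2 : atm) x y :
  relevant th a1 a2 -> In y (tvars (th x)) -> y = x \/ In y (avars a1 ++ avars a2).
Proof.
  intros R Hy. destruct (classic (th x = Var x)) as [E|N].
  - rewrite E in Hy. simpl in Hy. destruct Hy as [<-|[]]; auto.
  - right. apply (proj2 (R x N)). auto.
Qed.

Lemma relevant_out (th : subst Fsym) (a1 a2 : atm) x :
  relevant th a1 a2 -> ~ In x (avars a1 ++ avars a2) -> th x = Var x.
Proof.
  intros R Hx. destruct (classic (th x = Var x)) as [E|N]; auto.
  exfalso. apply Hx. apply (proj1 (R x N)).
Qed.

Definition vof (t : trm) : nat := match t with Var z => z | _ => 0 end.

Lemma mgu_unique (th1 th2 : subst Fsym) (a1 a2 : atm) :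
  relevant th1 a1 a2 -> mgu th1 a1 a2 -> relevant th2 a1 a2 -> mgu th2 a1 a2 ->
  exists p q, is_perm p q (avars a1 ++ avars a2) /\
    forall x, th2 x = tsubst (psub p) (th1 x).
Proof.
  intros R1 [U1 M1] R2 [U2 M2].
  set (V := avars a1 ++ avars a2).
  destruct (M1 th2 U2) as [eta He]. destruct (M2 th1 U1) as [eta' He'].
  assert (Hfix : forall x y, In y (tvars (th1 x)) -> tsubst eta' (eta y) = Var y).
  { intros x y Hy. assert (E : tsubst (fun z => tsubst eta' (eta z)) (th1 x) = th1 x).
    { rewrite <- tsubst_comp, <- He, <- He'. auto. }
    apply (tsubst_fix E Hy). }
  set (R := flat_map (fun x => tvars (th1 x)) V).
  destruct (@perm_extend V (map (fun y => (y, vof (eta y))) R)) as [p [q [P Hp]]].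
  - intros a b Hab. apply in_map_iff in Hab. destruct Hab as [y [E Hy]].
    injection E; intros; subst a b. unfold R in Hy. apply in_flat_map in Hy.
    destruct Hy as [x [Hx Hy]]. split.
    + destruct (relevant_range R1 Hy) as [->|]; auto.
    + pose proof (Hfix x y Hy) as F. apply tsubst_is_var in F.
      destruct F as [z [Ez _]]. rewrite Ez. simpl.
      assert (In z (tvars (th2 x))).
      { rewrite He. apply tvars_tsubst. exists y. rewrite Ez. simpl. auto. }
      destruct (relevant_range R2 H) as [->|]; auto.
  - intros a b a' b' H1 H2. apply in_map_iff in H1. apply in_map_iff in H2.
    destruct H1 as [y [E1 Hy]]. destruct H2 as [y' [E2 Hy']].
    injection E1; injection E2; intros; subst. split; intros; subst; auto.
    unfold R in Hy, Hy'. apply in_flat_map in Hy. apply in_flat_map in Hy'.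
    destruct Hy as [x [_ Hy]]. destruct Hy' as [x' [_ Hy']].
    pose proof (Hfix _ _ Hy) as F. pose proof (Hfix _ _ Hy') as F'.
    destruct (tsubst_is_var F) as [z [Ez Fz]].
    destruct (tsubst_is_var F') as [z' [Ez' Fz']].
    rewrite Ez, Ez' in H. simpl in H. subst z'. rewrite Fz in Fz'. injection Fz'; auto.
  - exists p, q. split; auto. intros x.
    destruct (in_dec Nat.eq_dec x V) as [Hx|Hx].
    + rewrite He. apply tsubst_ext. intros y Hy.
      assert (In y R) by (apply in_flat_map; eauto).
      pose proof (Hp y (vof (eta y))) as Q.
      unfold psub. rewrite Q by (apply in_map_iff; eauto).
      destruct (tsubst_is_var (Hfix _ _ Hy)) as [z [Ez _]]. rewrite Ez. auto.
    + rewrite (relevant_out R1 Hx), (relevant_out R2 Hx). simpl.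
      destruct P as [_ [_ P3]]. unfold psub. rewrite P3; auto.
Qed.

End Conj.

Lemma in_firstn_l {A} n (l : list A) x : In x (firstn n l) -> In x l.
Proof. intros H. rewrite <- (firstn_skipn n l). apply in_app_iff. auto. Qed.
Lemma in_skipn_l {A} n (l : list A) x : In x (skipn n l) -> In x l.
Proof. intros H. rewrite <- (firstn_skipn n l). apply in_app_iff. auto. Qed.

Section Deriv.
Variable Fsym Psym : Type.
Notation trm := (term Fsym).
Notation atm := (atom Fsym Psym).
Notation gl := (goal Fsym Psym).
Notation cl := (clause Fsym Psym).
Variable P : program Fsym Psym.

Definition resolvent (G : gl) (c : cl) (xi th : subst Fsym) (i : nat) : gl :=
  gsubst th (firstn i G ++ gsubst xi (body c) ++ skipn (S i) G).

Definition stepL (G : gl) (c : cl) (xi th : subst Fsym) (G' : gl) (i : nat) : Prop :=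
  In c P /\ renaming xi /\ exists a, nth_error G i = Some a /\ idempotent th /\
    relevant th (asubst xi (Defs.head c)) a /\ mgu th (asubst xi (Defs.head c)) a /\
    G' = resolvent G c xi th i.

Lemma sld_step_iff G c xi th G' : sld_step P G c xi th G' <-> exists i, stepL G c xi th G' i.
Proof.
  unfold sld_step, stepL, resolvent. split.
  - intros [H1 [H2 [i [a H]]]]. exists i. split; auto. split; auto. exists a; auto.
  - intros [i [H1 [H2 [a H]]]]. split; auto. split; auto. exists i, a; auto.
Qed.

Lemma step_vars G c xi th G' i : stepL G c xi th G' i ->
  forall y, In y (gvars G') -> In y (gvars G) \/ In y (cvars (csubst xi c)).
Proof.
  intros [_ [_ [a [Ha [_ [R [_ ->]]]]]]] y Hy. unfold resolvent in Hy.
  apply gvars_gsubst in Hy. destruct Hy as [x [Hx Hy]].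
  assert (HaG : forall z, In z (avars a) -> In z (gvars G)).
  { intros z Hz. unfold gvars. apply in_flat_map. exists a. split; auto.
    eapply nth_error_In; eauto. }
  assert (Hh : forall z, In z (avars (asubst xi (Defs.head c))) -> In z (cvars (csubst xi c))).
  { intros z Hz. unfold cvars, csubst. simpl. apply in_app_iff. auto. }
  assert (HX : In x (gvars G) \/ In x (cvars (csubst xi c))).
  { apply gvars_app in Hx. destruct Hx as [Hx|Hx].
    - left. revert Hx. apply gvars_incl. intros z; apply in_firstn_l.
    - apply gvars_app in Hx. destruct Hx as [Hx|Hx].
      + right. unfold cvars, csubst. simpl. apply in_app_iff. auto.
      + left. revert Hx. apply gvars_incl. intros z; apply in_skipn_l. }
  destruct (relevant_range R Hy) as [->|H]; auto.
  apply in_app_iff in H. destruct H; auto.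
Qed.

Lemma step_length G c xi th G' i : stepL G c xi th G' i ->
  i < length G /\ length G' = length G - 1 + length (body c).
Proof.
  intros [_ [_ [a [Ha [_ [_ [_ ->]]]]]]].
  assert (i < length G) by (apply nth_error_Some; congruence).
  split; auto. unfold resolvent, gsubst. rewrite !length_map, !length_app, length_firstn,
    length_map, length_skipn. lia.
Qed.

Fixpoint used (G : gl) (c : nat -> cl) (xi : nat -> subst Fsym) (k : nat) : list nat :=
  match k with
  | 0 => gvars G
  | S k' => used G c xi k' ++ cvars (csubst (xi k') (c k'))
  end.

Lemma used_char G c xi k x :
  In x (used G c xi k) <-> In x (gvars G) \/ exists j, j < k /\ In x (cvars (csubst (xi j) (c j))).
Proof.
  induction k; simpl.
  - split; auto. intros [H|[j [Hj _]]]; auto; lia.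
  - rewrite in_app_iff, IHk. split.
    + intros [[H|[j [Hj H]]]|H]; auto. right; exists j; split; auto; lia.
      right; exists k; auto.
    + intros [H|[j [Hj H]]]; auto. destruct (Nat.eq_dec j k); subst; auto.
      left; right; exists j; split; auto; lia.
Qed.

Lemma used_mono G c xi k k' x : k <= k' -> In x (used G c xi k) -> In x (used G c xi k').
Proof.
  intros Hk. rewrite !used_char. intros [H|[j [Hj H]]]; auto. right; exists j; split; auto; lia.
Qed.

Lemma deriv_fresh G len g c xi th j x :
  sld_derivation P G len g c xi th -> step_in len j ->
  In x (cvars (csubst (xi j) (c j))) -> ~ In x (used G c xi j).
Proof.
  intros [_ D] Hj Hx Hu. destruct (D j Hj) as [_ F]. destruct (F x Hx) as [F1 F2].
  apply used_char in Hu. destruct Hu as [Hu|[k [Hk Hu]]]. auto. apply (F2 k Hk Hu).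
Qed.

Lemma step_in_lt len j : step_in len j -> goal_in len j /\ goal_in len (S j).
Proof. destruct len; simpl; auto; lia. Qed.

Lemma goal_in_step len j : goal_in len (S j) -> step_in len j.
Proof. destruct len; simpl; auto; lia. Qed.

Lemma goal_in_le len j k : k <= j -> goal_in len j -> goal_in len k.
Proof. destruct len; simpl; auto; lia. Qed.

Lemma deriv_vars G len g c xi th k :
  sld_derivation P G len g c xi th -> goal_in len k ->
  forall y, In y (gvars (g k)) -> In y (used G c xi k).
Proof.
  intros D. induction k; intros Hk y Hy.
  - destruct D as [E _]. simpl. rewrite <- E. auto.
  - pose proof (goal_in_step Hk) as Hs. destruct D as [E D'].
    destruct (D' k Hs) as [St _]. apply sld_step_iff in St. destruct St as [i St].
    destruct (step_vars St Hy) as [H|H]; simpl; apply in_app_iff; auto.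
    left. apply IHk; auto. apply (goal_in_le (le_S _ _ (le_n k)) Hk).
Qed.

Definition maxbody : nat := list_max (map (fun c => length (body c)) P).

Lemma body_le c : In c P -> length (body c) <= maxbody.
Proof. intros H. apply in_le_max. apply in_map_iff. eauto. Qed.

Lemma deriv_length G len g c xi th k :
  sld_derivation P G len g c xi th -> goal_in len k ->
  length (g k) <= length G + k * maxbody.
Proof.
  intros D. induction k; intros Hk.
  - destruct D as [E _]. rewrite E. lia.
  - pose proof (goal_in_step Hk) as Hs. pose proof D as [E D'].
    destruct (D' k Hs) as [St _]. apply sld_step_iff in St. destruct St as [i St].
    destruct (step_length St) as [_ L]. pose proof St as [Hc _].
    pose proof (body_le Hc). specialize (IHk (goal_in_le (le_S _ _ (le_n k)) Hk)).
    simpl. lia.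
Qed.

Lemma step_transport G c xi th G' i p q W :
  stepL G c xi th G' i -> is_perm p q W ->
  stepL (gsubst (psub p) G) c (fun x => tsubst (psub p) (xi x)) (conj p q th)
        (gsubst (psub p) G') i.
Proof.
  intros [Hc [Rx [a [Ha [I [R [M E]]]]]]] Pp.
  split; auto. split. apply (renaming_comp Rx Pp).
  assert (Hh : asubst (fun x => tsubst (psub p) (xi x)) (Defs.head c) =
               asubst (psub p) (asubst xi (Defs.head c))) by (rewrite asubst_comp; auto).
  exists (asubst (psub p) a). split; [|split; [|split; [|split]]].
  - unfold gsubst. apply map_nth_error. auto.
  - apply (conj_idem Pp I).
  - rewrite Hh. apply (conj_relevant Pp R).
  - rewrite Hh. apply (conj_mgu Pp M).
  - subst G'. unfold resolvent.
    assert (F1 : firstn i (gsubst (psub p) G) = gsubst (psub p) (firstn i G))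
      by (unfold gsubst; apply firstn_map).
    assert (F2 : skipn (S i) (gsubst (psub p) G) = gsubst (psub p) (skipn (S i) G))
      by (unfold gsubst; apply skipn_map).
    rewrite F1, F2, <- (gsubst_comp (psub p) xi (body c)).
    rewrite <- !gsubst_app. rewrite (conj_g _ _ Pp). auto.
Qed.

Lemma cvars_transport (xi : subst Fsym) p (c : cl) y :
  In y (cvars (csubst (fun x => tsubst (psub p) (xi x)) c)) <->
  exists z, In z (cvars (csubst xi c)) /\ y = p z.
Proof.
  rewrite <- csubst_comp, cvars_csubst. split; intros [z [H1 H2]]; exists z; split; auto.
  apply (@tvars_psub Fsym p y z); auto. apply (@tvars_psub Fsym p y z); auto.
Qed.

End Deriv.

Section Eq.
Variable Fsym Psym : Type.
Notation trm := (term Fsym).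
Notation atm := (atom Fsym Psym).
Notation gl := (goal Fsym Psym).
Notation cl := (clause Fsym Psym).
Variable P : program Fsym Psym.

Lemma perm_weaken p q V W : is_perm p q V -> incl V W -> is_perm p q W.
Proof. intros [H1 [H2 H3]] I. repeat split; auto. Qed.

Lemma gsubst_psub_comp (p p' : nat -> nat) (g : gl) :
  gsubst (psub p') (gsubst (psub p) g) = gsubst (psub (fun x => p' (p x))) g.
Proof. rewrite gsubst_comp. apply gsubst_ext. intros; reflexivity. Qed.

Lemma gsubst_psub_inv p q W (g : gl) : is_perm p q W ->
  gsubst (psub q) (gsubst (psub p) g) = g.
Proof.
  intros [H1 [H2 _]]. rewrite gsubst_psub_comp. rewrite <- (gsubst_id g) at 2.
  apply gsubst_ext. intros. unfold psub. rewrite H2. auto.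
Qed.

Lemma renaming_cvars (xi : subst Fsym) f (c : cl) z :
  (forall x, xi x = Var (f x)) ->
  In z (cvars (csubst xi c)) <-> exists y, In y (cvars c) /\ z = f y.
Proof.
  intros Hf. rewrite cvars_csubst. split; intros [y [H1 H2]]; exists y; split; auto.
  rewrite Hf in H2. destruct H2 as [<-|[]]; auto. rewrite Hf; simpl; auto.
Qed.

Lemma step_unique (G : gl) c xi th G' xi' th' G'' i :
  stepL P G c xi th G' i -> stepL P G c xi' th' G'' i ->
  asubst xi (Defs.head c) = asubst xi' (Defs.head c) ->
  gsubst xi (body c) = gsubst xi' (body c) ->
  exists p q, is_perm p q (gvars G ++ cvars (csubst xi' c)) /\ G'' = gsubst (psub p) G'.
Proof.
  intros [_ [_ [a [Ha [_ [R [M E]]]]]]] [_ [_ [a' [Ha' [_ [R' [M' E']]]]]]] Eh Eb.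
  rewrite Ha in Ha'. injection Ha'; intros; subst a'.
  rewrite Eh in R, M.
  destruct (mgu_unique R M R' M') as [p [q [Pp Hp]]].
  exists p, q. split.
  - apply (perm_weaken Pp). intros x Hx. apply in_app_iff in Hx. apply in_app_iff.
    destruct Hx as [Hx|Hx].
    + right. unfold cvars, csubst; simpl. apply in_app_iff; auto.
    + left. unfold gvars. apply in_flat_map. exists a. split; auto. eapply nth_error_In; eauto.
  - subst G' G''. unfold resolvent. rewrite Eb, gsubst_comp.
    apply gsubst_ext. intros x _. auto.
Qed.

Definition follows (s : list (cl * nat)) (g : nat -> gl) (c : nat -> cl)
  (xi th : nat -> subst Fsym) : Prop :=
  forall j l, nth_error s j = Some l ->
    c j = fst l /\ stepL P (g j) (c j) (xi j) (th j) (g (S j)) (snd l).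

Lemma eq_deriv (G : gl) len1 g1 c1 xi1 th1 len2 g2 c2 xi2 th2 s :
  sld_derivation P G len1 g1 c1 xi1 th1 ->
  sld_derivation P G len2 g2 c2 xi2 th2 ->
  (forall j, j < length s -> step_in len1 j /\ step_in len2 j) ->
  follows s g1 c1 xi1 th1 -> follows s g2 c2 xi2 th2 ->
  forall d, d <= length s ->
    (forall k, k <= d -> exists p q W, is_perm p q W /\ g2 k = gsubst (psub p) (g1 k)) /\
    (exists p q W, is_perm p q W /\ g2 d = gsubst (psub p) (g1 d) /\
       forall x, In x (used G c1 xi1 d) <-> In (p x) (used G c2 xi2 d)).
Proof.
  intros D1 D2 Hlen F1 F2. induction d; intros Hd.
  - assert (g1 0 = g2 0) as E0 by (destruct D1 as [-> _]; destruct D2 as [-> _]; auto).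
    split.
    + intros k Hk. assert (k = 0) by lia. subst. exists (fun x => x), (fun x => x), [].
      split. apply perm_id. rewrite E0. symmetry. apply gsubst_id.
    + exists (fun x => x), (fun x => x), []. split. apply perm_id. split.
      rewrite E0. symmetry. apply gsubst_id. simpl. tauto.
  - destruct (IHd ltac:(lia)) as [Hist [p [q [W [Pp [Eg Hu]]]]]]. clear IHd.
    destruct (nth_error s d) as [[c0 i0]|] eqn:Hs.
    2:{ apply nth_error_None in Hs. lia. }
    destruct (F1 _ _ Hs) as [Ec1 S1]. destruct (F2 _ _ Hs) as [Ec2 S2]. simpl in *.
    rewrite Ec1 in S1. rewrite Ec2 in S2.
    destruct (Hlen d ltac:(lia)) as [L1 L2].
    pose proof S1 as [_ [[f1 [Hf1 [Inj1 _]]] _]].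
    pose proof S2 as [_ [[f2 [Hf2 [Inj2 _]]] _]].
    set (U1 := used G c1 xi1 d). set (U2 := used G c2 xi2 d).
    set (CV := cvars c0).
    assert (Fr1 : forall y, In y CV -> ~ In (f1 y) U1).
    { intros y Hy. apply (deriv_fresh D1 L1). rewrite Ec1. apply (renaming_cvars c0 _ Hf1). eauto. }
    assert (Fr2 : forall y, In y CV -> ~ In (f2 y) U2).
    { intros y Hy. apply (deriv_fresh D2 L2). rewrite Ec2. apply (renaming_cvars c0 _ Hf2). eauto. }
    assert (Cv1 : forall y, In y CV -> In (f1 y) (used G c1 xi1 (S d))).
    { intros y Hy. simpl. apply in_app_iff. right. rewrite Ec1. apply (renaming_cvars c0 _ Hf1). eauto. }
    assert (Cv2 : forall y, In y CV -> In (f2 y) (used G c2 xi2 (S d))).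
    { intros y Hy. simpl. apply in_app_iff. right. rewrite Ec2. apply (renaming_cvars c0 _ Hf2). eauto. }
    destruct (@perm_extend (used G c1 xi1 (S d) ++ used G c2 xi2 (S d))
      (map (fun x => (x, p x)) U1 ++ map (fun y => (f1 y, f2 y)) CV)) as [p2 [q2 [P2 Hp2]]].
    + intros a b Hab. apply in_app_iff in Hab. rewrite !in_app_iff. destruct Hab as [Hab|Hab];
        apply in_map_iff in Hab; destruct Hab as [y [E Hy]]; injection E; intros; subst a b.
      * split. left; simpl; apply in_app_iff; auto. right; simpl; apply in_app_iff; left; apply (proj1 (Hu y)); auto.
      * split. left; auto. right; auto.
    + intros a b a' b' H1 H2. apply in_app_iff in H1. apply in_app_iff in H2.
      destruct H1 as [H1|H1]; apply in_map_iff in H1; destruct H1 as [y [E1 Hy]];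
      injection E1; intros; subst a b;
      destruct H2 as [H2|H2]; apply in_map_iff in H2; destruct H2 as [y' [E2 Hy']];
      injection E2; intros; subst a' b'.
      * destruct Pp as [Q1 [Q2 _]]. split; intros; subst; auto.
        rewrite <- (Q2 y), H, Q2; auto.
      * split; intros E; exfalso. subst y. apply (Fr1 _ Hy'); auto.
        apply (Fr2 _ Hy'). rewrite <- E. apply Hu. auto.
      * split; intros E; exfalso. subst y'. apply (Fr1 _ Hy); auto.
        apply (Fr2 _ Hy). rewrite E. apply Hu. auto.
      * split; intros E. apply Inj1 in E; subst; auto. apply Inj2 in E; subst; auto.
    + pose proof P2 as [P21 [P22 P23]].
      assert (Hp2U : forall x, In x U1 -> p2 x = p x).
      { intros x Hx. apply Hp2. apply in_app_iff; left. apply in_map_iff. eauto. }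
      assert (Hp2C : forall y, In y CV -> p2 (f1 y) = f2 y).
      { intros y Hy. apply Hp2. apply in_app_iff; right. apply in_map_iff. eauto. }
      assert (Ega : g2 d = gsubst (psub p2) (g1 d)).
      { rewrite Eg. apply gsubst_ext. intros x Hx. unfold psub. rewrite Hp2U; auto.
        apply (deriv_vars D1 (proj1 (step_in_lt L1)) Hx). }
      assert (Exi : forall y, In y CV -> tsubst (psub p2) (xi1 d y) = xi2 d y).
      { intros y Hy. rewrite Hf1, Hf2. simpl. unfold psub. rewrite Hp2C; auto. }
      pose proof (step_transport S1 P2) as S1'. rewrite <- Ega in S1'.
      destruct (step_unique S1' S2) as [pr [qr [Pr Er]]].
      { apply asubst_ext. intros x Hx. apply Exi.
        unfold CV, cvars. apply in_app_iff; auto. }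
      { apply gsubst_ext. intros x Hx. apply Exi.
        unfold CV, cvars. apply in_app_iff; auto. }
      assert (Pr' : is_perm pr qr (used G c2 xi2 (S d))).
      { apply (perm_weaken Pr). intros x Hx. apply in_app_iff in Hx. simpl. apply in_app_iff.
        destruct Hx as [Hx|Hx]; auto. left. apply (deriv_vars D2 (proj1 (step_in_lt L2)) Hx).
        rewrite Ec2; auto. }
      assert (Enew : g2 (S d) = gsubst (psub (fun x => pr (p2 x))) (g1 (S d))).
      { rewrite Er, gsubst_psub_comp. auto. }
      split.
      * intros k Hk. destruct (Nat.eq_dec k (S d)) as [->|Hne].
        -- exists (fun x => pr (p2 x)), (fun x => q2 (qr x)), ((used G c1 xi1 (S d) ++ used G c2 xi2 (S d)) ++ used G c2 xi2 (S d)).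
           split. apply (perm_comp P2 Pr'). auto.
        -- apply Hist. lia.
      * exists (fun x => pr (p2 x)), (fun x => q2 (qr x)), ((used G c1 xi1 (S d) ++ used G c2 xi2 (S d)) ++ used G c2 xi2 (S d)).
        split. apply (perm_comp P2 Pr'). split. auto.
        intros x. transitivity (In (p2 x) (used G c2 xi2 (S d))); [| apply (perm_maps_W (p2 x) Pr')].
        simpl. rewrite !in_app_iff. fold U1 U2.
        rewrite Ec1, Ec2.
        rewrite (renaming_cvars c0 x Hf1), (renaming_cvars c0 (p2 x) Hf2).
        split.
        -- intros [Hx|[y [Hy ->]]].
           ++ left. rewrite Hp2U; auto. apply Hu; auto.
           ++ right. exists y. split; auto.
        -- intros [Hx|[y [Hy Ey]]].
           ++ left. pose proof Pp as [Q1 [Q2 _]].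
              assert (In (q (p2 x)) U1) by (apply Hu; rewrite Q1; auto).
              assert (x = q (p2 x)).
              { pose proof (Hp2U _ H) as K. rewrite Q1 in K.
                apply (f_equal q2) in K. rewrite !P22 in K. auto. }
              rewrite H0; auto.
           ++ right. exists y. split; auto. rewrite <- (Hp2C y Hy) in Ey.
              apply (f_equal q2) in Ey. rewrite !P22 in Ey. auto.
Qed.

Lemma pair_transfer (g1 g2 : nat -> gl) i j pi qi Wi pj qj Wj (tau : subst Fsym) :
  is_perm pi qi Wi -> is_perm pj qj Wj ->
  g2 i = gsubst (psub pi) (g1 i) -> g2 j = gsubst (psub pj) (g1 j) ->
  renaming tau -> g1 j = gsubst tau (g1 i) ->
  exists tau', renaming tau' /\ g2 j = gsubst tau' (g2 i).
Proof.
  intros Pi Pj Ei Ej R E. exists (fun x => tsubst (psub pj) (tau (qi x))). split.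
  - apply (renaming_conj R Pi Pj).
  - rewrite Ej, E. assert (g1 i = gsubst (psub qi) (g2 i)).
    { rewrite Ei. symmetry. apply (gsubst_psub_inv _ Pi). }
    rewrite H, !gsubst_comp. apply gsubst_ext. intros; simpl. reflexivity.
Qed.

End Eq.

Section Transplant.
Variable Fsym Psym : Type.
Notation gl := (goal Fsym Psym).
Notation cl := (clause Fsym Psym).
Variable P : program Fsym Psym.

Lemma transplant (G : gl) len g c xi th i j k (tau : subst Fsym) :
  sld_derivation P G len g c xi th -> i < j -> goal_in len k -> j <= k ->
  renaming tau -> g j = gsubst tau (g i) ->
  exists len' g' c' xi' th', sld_derivation P G len' g' c' xi' th' /\
    goal_in len' (k - (j - i)) /\ length (g' (k - (j - i))) = length (g k).
Proof.
  intros D Hij Hk Hjk R Eij.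
  pose proof R as [f [Hf [Inj _]]].
  set (dl := j - i).
  assert (Gj : goal_in len j) by (apply (goal_in_le Hjk Hk)).
  assert (Gi : goal_in len i) by (apply (goal_in_le (j:=k)); auto; lia).
  set (W := used G c xi j).
  destruct (@perm_extend W (map (fun y => (f y, y)) (gvars (g i)))) as [p [q [Pp Hp]]].
  { intros a b Hab. apply in_map_iff in Hab. destruct Hab as [y [E Hy]].
    injection E; intros; subst a b. split.
    - apply (deriv_vars D Gj). rewrite Eij. apply gvars_gsubst. exists y. rewrite Hf. simpl; auto.
    - apply (used_mono (k:=i)). lia. apply (deriv_vars D Gi). auto. }
  { intros a b a' b' H1 H2. apply in_map_iff in H1. apply in_map_iff in H2.
    destruct H1 as [y [E1 _]]. destruct H2 as [y' [E2 _]].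
    injection E1; injection E2; intros; subst. split; intros E; subst; auto. }
  pose proof Pp as [P1 [P2 P3]].
  assert (Hsig : gsubst (psub p) (g j) = g i).
  { rewrite Eij, gsubst_comp. rewrite <- (gsubst_id (g i)) at 2. apply gsubst_ext.
    intros y Hy. rewrite Hf. simpl. unfold psub. rewrite (Hp (f y) y); auto. apply in_map_iff. eauto. }
  assert (Fix : forall m z, j <= m -> step_in len m -> In z (cvars (csubst (xi m) (c m))) -> p z = z).
  { intros m z Hm Hs Hz. apply P3. intros Hw. apply (deriv_fresh D Hs Hz).
    apply (used_mono (k:=j)); auto. }
  set (g' := fun n => if n <=? i then g n else gsubst (psub p) (g (n + dl))).
  set (c' := fun n => if n <? i then c n else c (n + dl)).
  set (xi' := fun n => if n <? i then xi n else (fun x => tsubst (psub p) (xi (n + dl) x))).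
  set (th' := fun n => if n <? i then th n else conj p q (th (n + dl))).
  set (len' := match len with None => None | Some M => Some (M - dl) end).
  assert (Hg1 : forall n, n <= i -> g' n = g n).
  { intros n Hn. unfold g'. apply Nat.leb_le in Hn. rewrite Hn. auto. }
  assert (Hg2 : forall n, i <= n -> g' n = gsubst (psub p) (g (n + dl))).
  { intros n Hn. unfold g'. destruct (Nat.leb_spec n i).
    - assert (n = i) by lia. subst n. replace (i + dl) with j by (unfold dl; lia). auto.
    - auto. }
  assert (Hc1 : forall n, n < i -> c' n = c n /\ xi' n = xi n /\ th' n = th n).
  { intros n Hn. unfold c', xi', th'. apply Nat.ltb_lt in Hn. rewrite Hn. auto. }
  assert (Hc2 : forall n, i <= n -> c' n = c (n + dl) /\
     xi' n = (fun x => tsubst (psub p) (xi (n + dl) x)) /\ th' n = conj p q (th (n + dl))).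
  { intros n Hn. unfold c', xi', th'. destruct (Nat.ltb_spec n i). lia. auto. }
  assert (Hstep : forall n, step_in len' n -> step_in len (n + dl) /\ (n < i -> step_in len n)).
  { intros n Hn. unfold len' in Hn. destruct len as [M|]; simpl in *; split; intros; lia || auto. }
  assert (Hcv : forall n x, step_in len' n -> In x (cvars (csubst (xi' n) (c' n))) ->
     (n < i /\ In x (cvars (csubst (xi n) (c n)))) \/
     (i <= n /\ In x (cvars (csubst (xi (n + dl)) (c (n + dl)))))).
  { intros n x Hn Hx. destruct (lt_dec n i) as [Hlt|Hge].
    - left. destruct (Hc1 n Hlt) as [Ec [Ex _]]. rewrite Ec, Ex in Hx. auto.
    - right. split. lia. destruct (Hc2 n ltac:(lia)) as [Ec [Ex _]]. rewrite Ec, Ex in Hx.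
      apply cvars_transport in Hx. destruct Hx as [z [Hz ->]].
      assert (Ez : p z = z) by (apply (Fix (n+dl)); [unfold dl; lia | apply (proj1 (Hstep n Hn)) | auto]).
      rewrite Ez; auto. }
  exists len', g', c', xi', th'. split; [split|split].
  - rewrite Hg1 by lia. destruct D as [E _]. auto.
  - intros n Hn. destruct D as [E0 DD]. destruct (lt_dec n i) as [Hlt|Hge].
    + pose proof (proj2 (Hstep n Hn) Hlt) as Hs. destruct (DD n Hs) as [St Fr].
      destruct (Hc1 n Hlt) as [Ec [Ex Et]]. rewrite Ec, Ex, Et, !Hg1 by lia.
      split; auto. intros x Hx. destruct (Fr x Hx) as [F1 F2]. split; auto.
      intros k0 Hk0 Hx0. destruct (Hc1 k0 ltac:(lia)) as [Ec' [Ex' _]].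
      rewrite Ec', Ex' in Hx0. apply (F2 k0 Hk0 Hx0).
    + set (m := n + dl). pose proof (proj1 (Hstep n Hn)) as Hs. fold m in Hs.
      destruct (DD m Hs) as [St Fr].
      destruct (Hc2 n ltac:(lia)) as [Ec [Ex Et]]. fold m in Ec, Ex, Et.
      rewrite Ec, Ex, Et, Hg2, Hg2 by lia.
      replace (S n + dl) with (S m) by (unfold m; lia). split.
      * apply sld_step_iff in St. destruct St as [idx St]. apply sld_step_iff. exists idx.
        apply (step_transport St Pp).
      * intros x Hx. apply cvars_transport in Hx. destruct Hx as [z [Hz ->]].
        rewrite (Fix m z) by (auto; unfold m, dl; lia).
        destruct (Fr z Hz) as [F1 F2]. split; auto.
        intros k0 Hk0 Hx0. destruct (Hcv k0 z) as [[_ H0]|[_ H0]]; auto.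
        { destruct len' as [M'|]; simpl in *; lia || auto. }
        -- apply (F2 k0). unfold m; lia. auto.
        -- apply (F2 (k0 + dl)). unfold m; lia. auto.
  - unfold len'. destruct len as [M|]; simpl in *; auto. lia.
  - destruct (Nat.eq_dec (k - dl) i) as [E|E].
    + assert (k = j) by (unfold dl in E; lia). subst k. rewrite E, Hg1 by lia.
      rewrite Eij. unfold gsubst. rewrite length_map. auto.
    + rewrite Hg2 by (unfold dl; lia). replace (k - dl + dl) with k by (unfold dl; lia).
      unfold gsubst. rewrite length_map. auto.
Qed.

End Transplant.

Lemma pigeon_aux {A} (L : list A) (Q : A -> nat -> Prop) :
  (forall l n n', n' <= n -> Q l n -> Q l n') ->
  (forall l, In l L -> exists n, ~ Q l n) -> exists N, forall l, In l L -> ~ Q l N.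
Proof.
  intros Mo. induction L as [|a L IH]; intros H.
  - exists 0. intros l [].
  - destruct IH as [N HN]. intros l Hl; apply H; simpl; auto.
    destruct (H a (or_introl eq_refl)) as [na Hna].
    exists (max N na). intros l [El|Hl] HQ.
    + subst l. apply Hna. apply (Mo a (max N na)); auto; lia.
    + apply (HN l Hl). apply (Mo l (max N na)); auto; lia.
Qed.

Lemma pigeon {A} (L : list A) (Q : A -> nat -> Prop) :
  (forall l n n', n' <= n -> Q l n -> Q l n') ->
  (forall n, exists l, In l L /\ Q l n) -> exists l, In l L /\ forall n, Q l n.
Proof.
  intros Mo H. apply NNPP. intros Hn.
  destruct (@pigeon_aux _ L Q Mo) as [N HN].
  - intros l Hl. apply NNPP. intros Hc. apply Hn. exists l. split; auto.
    intros n. apply NNPP. intros Hq. apply Hc. eauto.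
  - destruct (H N) as [l [Hl HQ]]. apply (HN l Hl HQ).
Qed.

Section Koenig.
Variable Fsym Psym : Type.
Notation gl := (goal Fsym Psym).
Notation cl := (clause Fsym Psym).
Variable P : program Fsym Psym.
Variable G : gl.

Definition pairfree (g : nat -> gl) (m : nat) : Prop :=
  forall i j (tau : subst Fsym), i < j -> j <= m -> renaming tau -> g j <> gsubst tau (g i).

Lemma deriv_trunc len g c xi th m :
  sld_derivation P G len g c xi th -> goal_in len m -> sld_derivation P G (Some m) g c xi th.
Proof.
  intros [E D] Hm. split; auto. intros j Hj. apply D. destruct len; simpl in *; auto. lia.
Qed.

Lemma deriv_eq_len g c xi th a b :
  sld_derivation P G (Some a) g c xi th -> a = b -> sld_derivation P G (Some b) g c xi th.
Proof. intros H ->; auto. Qed.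

Definition Good (s : list (cl * nat)) : Prop :=
  forall n, exists g c xi th, sld_derivation P G (Some (length s + n)) g c xi th /\
    follows P s g c xi th /\ pairfree g (length s + n).

Lemma follows_app s t g c xi th : follows P (s ++ t) g c xi th -> follows P s g c xi th.
Proof.
  intros F j l Hj. apply F. rewrite nth_error_app1; auto. apply nth_error_Some. congruence.
Qed.

Lemma follows_snoc s l g c xi th : follows P s g c xi th ->
  c (length s) = fst l ->
  stepL P (g (length s)) (c (length s)) (xi (length s)) (th (length s)) (g (S (length s))) (snd l) ->
  follows P (s ++ [l]) g c xi th.
Proof.
  intros F E S j l' Hj. destruct (lt_dec j (length s)).
  - rewrite nth_error_app1 in Hj by auto. apply F; auto.
  - rewrite nth_error_app2 in Hj by lia. destruct (j - length s) as [|x] eqn:Ex.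
    + simpl in Hj. injection Hj; intros; subst. assert (j = length s) by lia. subst. auto.
    + simpl in Hj. destruct x; discriminate.
Qed.

Lemma Good_ext s : Good s -> exists l, Good (s ++ [l]).
Proof.
  intros Hg.
  set (B := length G + length s * maxbody P).
  destruct (@pigeon _ (list_prod P (seq 0 (S B)))
    (fun l n => exists g c xi th, sld_derivation P G (Some (length (s ++ [l]) + n)) g c xi th /\
       follows P (s ++ [l]) g c xi th /\ pairfree g (length (s ++ [l]) + n))) as [l [_ Hl]].
  - intros l n n' Hn [g [c [xi [th [D [F Pf]]]]]]. exists g, c, xi, th. split; [|split]; auto.
    + apply (deriv_trunc D). simpl. lia.
    + intros i j tau H1 H2. apply Pf; lia.
  - intros n. destruct (Hg (S n)) as [g [c [xi [th [D [F Pf]]]]]].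
    pose proof D as [_ DD]. destruct (DD (length s) ltac:(simpl; lia)) as [St _].
    apply sld_step_iff in St. destruct St as [idx St].
    exists (c (length s), idx). split.
    + apply in_prod. apply St. apply in_seq. split. lia.
      destruct (step_length St) as [Hi _].
      pose proof (deriv_length D (k := length s) ltac:(simpl; lia)). unfold B. lia.
    + exists g, c, xi, th. rewrite length_app. simpl. split; [|split].
      * apply (deriv_eq_len D). lia.
      * apply follows_snoc; auto.
      * intros i j tau H1 H2. apply Pf; lia.
  - exists l. exact Hl.
Qed.

Definition St : Type := ((nat -> gl) * (nat -> cl) * (nat -> subst Fsym) * (nat -> subst Fsym) * list (cl * nat))%type.

Definition Inv (st : St) : Prop :=
  let '(g, c, xi, th, s) := st in
  sld_derivation P G (Some (length s)) g c xi th /\ follows P s g c xi th /\ Good s.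

Definition Ext (st st' : St) : Prop :=
  let '(g, c, xi, th, s) := st in
  let '(g', c', xi', th', s') := st' in
  (exists l, s' = s ++ [l]) /\
  (forall n, n <= length s -> g' n = g n) /\
  (forall n, n < length s -> c' n = c n /\ xi' n = xi n /\ th' n = th n).

Lemma next_ex st : Inv st -> exists st', Inv st' /\ Ext st st'.
Proof.
  destruct st as [[[[g c] xi] th] s]. intros [D [F Gd]].
  destruct (Good_ext Gd) as [l Gl].
  destruct (Gl 0) as [g1 [c1 [xi1 [th1 [D1 [F1 _]]]]]].
  rewrite length_app, Nat.add_0_r in D1. simpl in D1.
  destruct (@eq_deriv _ _ P G _ _ _ _ _ _ _ _ _ _ s D1 D) with (d := length s)
    as [_ [p [q [W [Pp [Eg Hu]]]]]].
  - intros j Hj. simpl. lia.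
  - apply (follows_app F1).
  - exact F.
  - lia.
  - set (k := length s).
    destruct (F1 k l) as [Ec1 S1].
    { unfold k. rewrite nth_error_app2 by lia. rewrite Nat.sub_diag. auto. }
    set (g' := fun n => if n <=? k then g n else gsubst (psub p) (g1 n)).
    set (c' := fun n => if n <? k then c n else c1 n).
    set (xi' := fun n => if n <? k then xi n else (fun x => tsubst (psub p) (xi1 n x))).
    set (th' := fun n => if n <? k then th n else conj p q (th1 n)).
    assert (Hg1 : forall n, n <= k -> g' n = g n).
    { intros n Hn. unfold g'. apply Nat.leb_le in Hn. rewrite Hn. auto. }
    assert (HgS : g' (S k) = gsubst (psub p) (g1 (S k))).
    { unfold g'. destruct (Nat.leb_spec (S k) k). lia. auto. }
    assert (Hc1 : forall n, n < k -> c' n = c n /\ xi' n = xi n /\ th' n = th n).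
    { intros n Hn. unfold c', xi', th'. apply Nat.ltb_lt in Hn. rewrite Hn. auto. }
    assert (Hck : c' k = c1 k /\ xi' k = (fun x => tsubst (psub p) (xi1 k x)) /\
                  th' k = conj p q (th1 k)).
    { unfold c', xi', th'. rewrite Nat.ltb_irrefl. auto. }
    destruct Hck as [Eck [Exk Etk]].
    assert (S1' : stepL P (g' k) (c' k) (xi' k) (th' k) (g' (S k)) (snd l)).
    { rewrite Hg1, Eck, Exk, Etk, HgS by lia. fold k in Eg. rewrite Eg.
      apply (step_transport S1 Pp). }
    exists (g', c', xi', th', s ++ [l]). split.
    + split; [|split]; auto.
      * rewrite length_app. simpl. split.
        -- rewrite Hg1 by lia. destruct D as [E _]. auto.
        -- intros n Hn. simpl in Hn. fold k in Hn. destruct (Nat.eq_dec n k) as [->|Hne].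
           ++ split. apply sld_step_iff. eauto.
              intros x Hx. rewrite Eck, Exk in Hx. apply cvars_transport in Hx.
              destruct Hx as [z [Hz ->]].
              assert (Hz' : ~ In z (used G c1 xi1 k)) by (apply (deriv_fresh D1); simpl; auto; lia).
              assert (Hpz : ~ In (p z) (used G c xi k)) by (intros Hc0; apply Hz'; apply (proj2 (Hu z)); exact Hc0).
              rewrite used_char in Hpz. split. tauto.
              intros k0 Hk0 Hin. destruct (Hc1 k0 Hk0) as [E1 [E2 _]]. rewrite E1, E2 in Hin.
              apply Hpz. right. eauto.
           ++ assert (n < k) by lia. pose proof D as [_ DD]. destruct (DD n ltac:(simpl; lia)) as [St Fr].
              destruct (Hc1 n H) as [E1 [E2 E3]]. rewrite E1, E2, E3, !Hg1 by lia.
              split; auto. intros x Hx. destruct (Fr x Hx) as [Fr1 Fr2]. split; auto.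
              intros k0 Hk0 Hin. destruct (Hc1 k0 ltac:(lia)) as [E1' [E2' _]].
              rewrite E1', E2' in Hin. apply (Fr2 k0 Hk0 Hin).
      * apply follows_snoc.
        -- intros j l' Hj. pose proof Hj as Hj'. apply (F j l') in Hj'.
           assert (j < k) by (apply nth_error_Some; unfold k in *; congruence).
           destruct (Hc1 j H) as [E1 [E2 E3]]. rewrite E1, E2, E3, !Hg1 by lia. auto.
        -- fold k. rewrite Eck. auto.
        -- fold k. auto.
    + simpl. split; [|split].
      * eauto.
      * intros n Hn. apply Hg1. auto.
      * intros n Hn. apply Hc1. auto.
Qed.

End Koenig.

Section Koenig2.
Variable Fsym Psym : Type.
Notation gl := (goal Fsym Psym).
Notation cl := (clause Fsym Psym).
Variable P : program Fsym Psym.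
Variable G0 : gl.

Definition gs (st : St Fsym Psym) := fst (fst (fst (fst st))).
Definition cs (st : St Fsym Psym) := snd (fst (fst (fst st))).
Definition xis (st : St Fsym Psym) := snd (fst (fst st)).
Definition ths (st : St Fsym Psym) := snd (fst st).
Definition ss (st : St Fsym Psym) := snd st.

Lemma Inv_unf st : Inv P G0 st <->
  sld_derivation P G0 (Some (length (ss st))) (gs st) (cs st) (xis st) (ths st) /\
  follows P (ss st) (gs st) (cs st) (xis st) (ths st) /\ Good P G0 (ss st).
Proof. destruct st as [[[[g c] xi] th] s]. reflexivity. Qed.

Lemma Ext_unf st st' : Ext st st' <->
  (exists l, ss st' = ss st ++ [l]) /\
  (forall n, n <= length (ss st) -> gs st' n = gs st n) /\
  (forall n, n < length (ss st) -> cs st' n = cs st n /\ xis st' n = xis st n /\ ths st' n = ths st n).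
Proof. destruct st as [[[[g c] xi] th] s]. destruct st' as [[[[g' c'] xi'] th'] s']. reflexivity. Qed.

Lemma koenig :
  (forall g c xi th, sld_derivation P G0 None g c xi th ->
     exists i j (tau : subst Fsym), i < j /\ renaming tau /\ g j = gsubst tau (g i)) ->
  exists d, forall len g c xi th, sld_derivation P G0 len g c xi th -> goal_in len d ->
    ~ pairfree g d.
Proof.
  intros Hyp. apply NNPP. intros Hn.
  assert (Hall : forall d, exists len g c xi th, sld_derivation P G0 len g c xi th /\
     goal_in len d /\ pairfree g d).
  { intros d. apply NNPP. intros Hd. apply Hn. exists d. intros len g c xi th D Gd Pf.
    apply Hd. exists len, g, c, xi, th. auto. }
  assert (G0d : Good P G0 []).
  { intros n. destruct (Hall n) as [len [g [c [xi [th [D [Gd Pf]]]]]]].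
    exists g, c, xi, th. simpl. split; [|split].
    - apply (deriv_trunc D Gd).
    - intros j l Hj. destruct j; discriminate.
    - auto. }
  assert (Hnx : forall st : St Fsym Psym, exists st', Inv P G0 st -> Inv P G0 st' /\ Ext st st').
  { intros st. destruct (classic (Inv P G0 st)) as [I|NI].
    - destruct (next_ex I) as [st' H]. eauto.
    - exists st. intros I; contradiction. }
  set (next := fun st => proj1_sig (constructive_indefinite_description _ (Hnx st))).
  assert (Hnext : forall st, Inv P G0 st -> Inv P G0 (next st) /\ Ext st (next st)).
  { intros st. unfold next. destruct (constructive_indefinite_description _ (Hnx st)). auto. }
  destruct (G0d 0) as [g0 [c0 [xi0 [th0 [D0 [F0 _]]]]]].
  set (st0 := (g0, c0, xi0, th0, @nil (cl * nat)) : St Fsym Psym).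
  assert (I0 : Inv P G0 st0) by (simpl; split; [|split]; auto).
  set (stn := fun n => Nat.iter n next st0).
  assert (Istn : forall n, Inv P G0 (stn n) /\ length (ss (stn n)) = n).
  { induction n.
    - split; auto.
    - destruct IHn as [I L]. simpl. fold (stn n). destruct (Hnext _ I) as [I' E'].
      split; auto. apply Ext_unf in E'. destruct E' as [[l El] _].
      rewrite El, length_app, L. simpl. lia. }
  assert (Agr : forall m d, (forall x, x <= m -> gs (stn (m + d)) x = gs (stn m) x) /\
      (forall x, x < m -> cs (stn (m + d)) x = cs (stn m) x /\
          xis (stn (m + d)) x = xis (stn m) x /\ ths (stn (m + d)) x = ths (stn m) x)).
  { intros m d. induction d.
    - rewrite Nat.add_0_r. auto.
    - replace (m + S d) with (S (m + d)) by lia. simpl. fold (stn (m + d)).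
      destruct (Istn (m + d)) as [I L]. destruct (Hnext _ I) as [_ E'].
      apply Ext_unf in E'. destruct E' as [_ [Eg Ec]]. rewrite L in Eg, Ec.
      destruct IHd as [IH1 IH2]. split.
      + intros x Hx. rewrite Eg by lia. auto.
      + intros x Hx. destruct (Ec x ltac:(lia)) as [A1 [A2 A3]].
        destruct (IH2 x Hx) as [B1 [B2 B3]]. rewrite A1, A2, A3. auto. }
  set (gi := fun n => gs (stn n) n).
  set (ci := fun n => cs (stn (S n)) n).
  set (xii := fun n => xis (stn (S n)) n).
  set (thi := fun n => ths (stn (S n)) n).
  assert (Di : sld_derivation P G0 None gi ci xii thi).
  { split.
    - unfold gi. simpl. destruct D0 as [E _]. auto.
    - intros j _. destruct (Istn (S j)) as [I L]. apply Inv_unf in I.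
      destruct I as [[_ DD] _]. rewrite L in DD. destruct (DD j ltac:(simpl; lia)) as [St Fr].
      assert (Egj : gi j = gs (stn (S j)) j).
      { unfold gi. replace (S j) with (j + 1) by lia. symmetry. apply (proj1 (Agr j 1)). lia. }
      unfold ci, xii, thi. rewrite Egj. split; auto.
      intros x Hx. destruct (Fr x Hx) as [F1 F2]. split; auto. intros k Hk.
      destruct (proj2 (Agr (S k) (j - k)) k ltac:(lia)) as [A1 [A2 _]].
      replace (S k + (j - k)) with (S j) in A1, A2 by lia.
      rewrite <- A1, <- A2. auto. }
  destruct (Hyp _ _ _ _ Di) as [i [j [tau [Hij [R Ep]]]]].
  destruct (Istn j) as [Ij Lj]. apply Inv_unf in Ij. destruct Ij as [Dj [Fj Gj]].
  destruct (Gj 0) as [g2 [c2 [xi2 [th2 [D2 [F2 Pf2]]]]]].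
  rewrite Lj, Nat.add_0_r in D2, Pf2. rewrite Lj in Dj.
  destruct (@eq_deriv _ _ P G0 _ _ _ _ _ _ _ _ _ _ (ss (stn j)) Dj D2 ltac:(intros; simpl; lia) Fj F2 j ltac:(lia))
    as [Hist _].
  destruct (Hist i ltac:(lia)) as [pi [qi [Wi [Pi Ei]]]].
  destruct (Hist j ltac:(lia)) as [pj [qj [Wj [Pj Ej]]]].
  assert (E1 : gs (stn j) j = gsubst tau (gs (stn j) i)).
  { assert (gs (stn j) i = gi i).
    { unfold gi. replace j with (i + (j - i)) by lia. apply (proj1 (Agr i (j - i))). lia. }
    rewrite H. exact Ep. }
  destruct (pair_transfer Pi Pj Ei Ej R E1) as [tau' [R' E']].
  apply (Pf2 i j tau' Hij (le_n j) R' E').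
Qed.

End Koenig2.
Unset Implicit Arguments. Set Strict Implicit.

Theorem lemmaL1p2p1 (Fsym Psym : Type) (P : program Fsym Psym) (G : goal Fsym Psym) :
  (forall g c xi th,
     sld_derivation P G None g c xi th -> pruned_EVR_L None G g th) ->
  exists l : nat,
    forall len g c xi th,
      sld_derivation P G len g c xi th ->
      forall j, goal_in len j -> length (g j) <= l.
Proof.
  intros Hyp.
  destruct (@koenig Fsym Psym P G) as [d Hd].
  { intros g c xi th D. destruct (Hyp g c xi th D) as [i [j [tau [Hij [_ [R [_ E]]]]]]].
    exists i, j, tau. auto. }
  exists (length G + d * maxbody P).
  intros len g c xi th D j Hj. revert len g c xi th D Hj.
  induction j as [k IH] using (well_founded_induction lt_wf).
  intros len g c xi th D Hk.
  destruct (le_lt_dec k d) as [Hkd|Hkd].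
  - pose proof (deriv_length D Hk). pose proof (Nat.mul_le_mono_r k d (maxbody P) Hkd). lia.
  - assert (Gd : goal_in len d) by (apply (goal_in_le (j := k)); auto; lia).
    pose proof (Hd len g c xi th D Gd) as NP.
    unfold pairfree in NP.
    apply not_all_ex_not in NP. destruct NP as [i NP].
    apply not_all_ex_not in NP. destruct NP as [j NP].
    apply not_all_ex_not in NP. destruct NP as [tau NP].
    apply imply_to_and in NP. destruct NP as [Hij NP].
    apply imply_to_and in NP. destruct NP as [Hjd NP].
    apply imply_to_and in NP. destruct NP as [R NP].
    apply NNPP in NP.
    destruct (transplant D Hij Hk ltac:(lia) R NP) as [len' [g' [c' [xi' [th' [D' [Gk' Lk']]]]]]].
    rewrite <- Lk'. apply (IH (k - (j - i)) ltac:(lia) len' g' c' xi' th' D' Gk').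
Qed.
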